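(* Let $G$ be $\hbar$-perfect and let $G'$ be obtained from $G$ by copying one vertex $v$, i.e. adding a new vertex $v'$ whose neighbourhood is exactly the neighbourhood of $v$ in $G$ (so $v'$ is not adjacent to $v$). Then $G'$ is $\hbar$-perfect.
   Context: A realization of a graph $G$ on $\{1,\dots,n\}$ is a tuple $(S_1,\dots,S_n)$ of Pauli strings (tensor products of matrices from $\{I,X,Y,Z\}$) of common length with $S_i,S_j$ anticommuting iff $i\sim j$ and commuting otherwise; every graph has one. For $w\in\mathbb{R}^n_{\ge0}$, $\beta(G,w)=\sup_\rho\sum_iw_i\operatorname{tr}(\rho S_i)^2$ over density matrices $\rho$ (independent of the realization), and $\alpha(G,w)=\max\{\sum_{i\in I}w_i: I\text{ independent set of }G\}$. $G$ is $\hbar$-perfect if $\beta(G,w)=\alpha(G,w)$ for all $w\in\mathbb{R}^n_{\ge0}$. *)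

(* Defs.v *)
From HB Require Import structures.
From mathcomp Require Import all_boot all_order all_algebra.
From mathcomp Require Import complex mxtens.
From mathcomp Require Import boolp classical_sets reals.

Set Implicit Arguments.
Unset Strict Implicit.
Unset Printing Implicit Defensive.

Import Order.TTheory GRing.Theory Num.Theory.
Local Open Scope ring_scope.

Section HbarPerfect.
Variable R : realType.
Local Notation C := R[i].

(* The four single-qubit Pauli matrices, indexed 0:I, 1:X, 2:Y, 3:Z. *)
Definition pauli (k : 'I_4) : 'M[C]_2 :=
  \matrix_(a < 2, b < 2)
    match val k with
    | 0 => if val a == val b then 1 else 0
    | 1 => if val a == val b then 0 else 1
    | 2 => if val a == val b then 0
           else if val a == 0%N then - 'i%C else 'i%C
    | _ => if val a == val b then (if val a == 0%N then 1 else -1)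
           else 0
    end.

Fixpoint pauli_string (m : nat) : ('I_m -> 'I_4) -> 'M[C]_(2 ^ m) :=
  match m return ('I_m -> 'I_4) -> 'M[C]_(2 ^ m) with
  | 0 => fun _ => 1%:M
  | m'.+1 => fun s =>
      castmx (esym (expnS 2 m'), esym (expnS 2 m'))
        (pauli (s ord0) *t pauli_string (fun i : 'I_m' => s (lift ord0 i)))
  end.

Definition realization (n : nat) (e : rel 'I_n) (m : nat)
    (S : 'I_n -> 'I_m -> 'I_4) : Prop :=
  forall i j : 'I_n,
    let A := pauli_string (S i) in
    let B := pauli_string (S j) in
    (e i j -> A *m B = - (B *m A)) /\ (~~ e i j -> A *m B = B *m A).

Definition adjmx (p q : nat) (A : 'M[C]_(p, q)) : 'M[C]_(q, p) :=
  (map_mx (@conjc R) A)^T.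

Definition density (N : nat) (rho : 'M[C]_N) : Prop :=
  [/\ adjmx rho = rho,
      (forall x : 'cV[C]_N, 0 <= ((adjmx x) *m rho *m x) 0 0)
    & \tr rho = 1].

(* beta(G, w) = sup_rho sum_i w_i tr(rho S_i)^2, computed from the
   realization S.  tr(rho S_i) is real for Hermitian rho, S_i; we take
   its real part to land in R. *)
Definition beta (n m : nat) (S : 'I_n -> 'I_m -> 'I_4) (w : 'I_n -> R) : R :=
  sup [set t : R | exists rho : 'M[C]_(2 ^ m), density rho /\
        t = \sum_(i < n) w i * (@complex.Re R (\tr (rho *m pauli_string (S i)))) ^+ 2].

Definition independent (n : nat) (e : rel 'I_n) (I : {set 'I_n}) : bool :=
  [forall i in I, forall j in I, ~~ e i j].

Definition alpha (n : nat) (e : rel 'I_n) (w : 'I_n -> R) : R :=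
  \big[Num.max/0]_(I : {set 'I_n} | independent e I) \sum_(i in I) w i.

(* hbar-perfect: beta(G,w) = alpha(G,w) for every nonnegative weight w.
   Since beta does not depend on the realization (and realizations exist),
   we require it for every realization. *)
Definition hperfect (n : nat) (e : rel 'I_n) : Prop :=
  forall (m : nat) (S : 'I_n -> 'I_m -> 'I_4), realization e S ->
  forall w : 'I_n -> R, (forall i, 0 <= w i) -> beta S w = alpha e w.

End HbarPerfect.

(* The graph G' on 'I_n.+1 obtained from G on 'I_n by adding a copy
   v' := ord_max of the vertex v: vertex ord_max is mapped to v, and
   i ~' j iff (image of i) ~ (image of j).  For irreflexive e, v' and v
   are non-adjacent and N_{G'}(v') = N_G(v). *)
Definition copy_proj (n : nat) (v : 'I_n) (i : 'I_n.+1) : 'I_n :=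
  odflt v (unlift ord_max i).

Definition copy_vertex (n : nat) (e : rel 'I_n) (v : 'I_n) : rel 'I_n.+1 :=
  fun i j => e (copy_proj v i) (copy_proj v j).

(* Main.v *)
Require Import Defs.
From HB Require Import structures.
From mathcomp Require Import all_boot all_order all_algebra.
From mathcomp Require Import complex mxtens.
From mathcomp Require Import boolp classical_sets reals.
From mathcomp Require Import lra.
Set Implicit Arguments. Unset Strict Implicit. Unset Printing Implicit Defensive.
Import Order.TTheory GRing.Theory Num.Theory.
Local Open Scope ring_scope.

Section S.
Variable R : realType.
Local Notation C := R[i].

Lemma pauli_sq (k : 'I_4) : pauli R k *m pauli R k = 1.
Proof.
apply/matrixP => a b; rewrite !mxE !big_ord_recr big_ord0 /= !mxE.
case: k => [[|[|[|[|k]]]] Hk] //=;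
case: a => [[|[|a]] Ha] //=; case: b => [[|[|b]] Hb] //=;
rewrite ?mul0r ?mulr0 ?mul1r ?mulr1 ?addr0 ?add0r ?mulrNN ?mulN1r //;
idtac. all: try (by rewrite ?mulrN ?mulNr ?opprK -?expr2 ?sqr_i ?opprK). 
all: exact: mulr1.
Qed.

Lemma pauli_herm (k : 'I_4) : adjmx (pauli R k) = pauli R k.
Proof.
apply/matrixP => a b; rewrite !mxE.
case: k => [[|[|[|[|k]]]] Hk] //=;
case: a => [[|[|a]] Ha] //=; case: b => [[|[|b]] Hb] //=.
all: by apply/eqP; rewrite eq_complex /= ?oppr0 ?opprK !eqxx.
Qed.

Lemma cast_mulmx p q (E : p = q) (A B : 'M[C]_p) :
  castmx (E, E) A *m castmx (E, E) B = castmx (E, E) (A *m B).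
Proof. by case: q / E. Qed.

Lemma cast_adj p q (E : p = q) (A : 'M[C]_p) :
  adjmx (castmx (E, E) A) = castmx (E, E) (adjmx A).
Proof. by case: q / E. Qed.

Lemma cast_one p q (E : p = q) : castmx (E, E) (1 : 'M[C]_p) = 1.
Proof. by case: q / E. Qed.

Lemma tens11 p q : (1 : 'M[C]_p) *t (1 : 'M[C]_q) = 1.
Proof.
apply/matrixP => i j.
case: (mxtens_indexP i) => i1 i2; case: (mxtens_indexP j) => j1 j2.
rewrite tensmxE !mxE.
have -> : (mxtens_index (i1, i2) == mxtens_index (j1, j2)) = ((i1, i2) == (j1, j2)).
  by apply/eqP/eqP => [/(congr1 (@mxtens_unindex _ _))|->]; rewrite ?mxtens_indexK.
rewrite xpair_eqE.
by case: (i1 == j1); case: (i2 == j2); rewrite /= ?mulr1 ?mulr0 ?mul0r.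
Qed.

Lemma adj_tens p q r t (A : 'M[C]_(p, q)) (B : 'M[C]_(r, t)) :
  adjmx (A *t B) = adjmx A *t adjmx B.
Proof. by rewrite /adjmx map_mxT trmx_tens. Qed.

Lemma ps_sq m (s : 'I_m -> 'I_4) : pauli_string R s *m pauli_string R s = 1.
Proof.
elim: m s => [|m IH] s /=; first by rewrite mul1mx.
by rewrite cast_mulmx tensmx_mul pauli_sq IH tens11 cast_one.
Qed.

Lemma ps_herm m (s : 'I_m -> 'I_4) : adjmx (pauli_string R s) = pauli_string R s.
Proof.
elim: m s => [|m IH] s.
  by apply/matrixP => i j; rewrite /adjmx /= !mxE eq_sym (@conjc_nat R (i == j)).
rewrite /=.
by rewrite cast_adj adj_tens pauli_herm IH.
Qed.

Lemma adjE p q (M : 'M[C]_(p, q)) i j : adjmx M i j = (M j i)^*%C.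
Proof. by rewrite !mxE. Qed.

Lemma adjK p q (M : 'M[C]_(p, q)) : adjmx (adjmx M) = M.
Proof. by apply/matrixP => i j; rewrite !adjE conjcK. Qed.

Lemma psd_tr N (rho B : 'M[C]_N) :
  (forall x : 'cV[C]_N, 0 <= ((adjmx x) *m rho *m x) 0 0) ->
  0 <= \tr (rho *m (adjmx B *m B)).
Proof.
move=> Hpsd.
rewrite mulmxA mxtrace_mulC /mxtrace; apply: sumr_ge0 => j _.
have := Hpsd (col j (adjmx B)).
suff -> : (adjmx (col j (adjmx B)) *m rho *m col j (adjmx B)) 0 0
        = (B *m (rho *m adjmx B)) j j by [].
rewrite mulmxA !mxE; apply: eq_bigr => k _; rewrite !mxE; congr (_ * _).
by apply: eq_bigr => l _; rewrite !mxE conjcK.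
Qed.

Lemma adjZ p q c (M : 'M[C]_(p, q)) : adjmx (c *: M) = c^*%C *: adjmx M.
Proof. by apply/matrixP => i j; rewrite !mxE rmorphM. Qed.
Lemma adjD p q (M N : 'M[C]_(p, q)) : adjmx (M + N) = adjmx M + adjmx N.
Proof. by apply/matrixP => i j; rewrite !mxE rmorphD. Qed.
Lemma adj1 p : adjmx (1 : 'M[C]_p) = 1.
Proof. by apply/matrixP => i j; rewrite !mxE eq_sym (@conjc_nat R (i == j)). Qed.

Lemma proj_ge0 N (rho B : 'M[C]_N) :
  (forall x : 'cV[C]_N, 0 <= ((adjmx x) *m rho *m x) 0 0) ->
  \tr rho = 1 -> B *m B = 1 -> adjmx B = B -> 0 <= 1 + \tr (rho *m B).
Proof.
move=> Hpsd Htr BB hB.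
set P := (2^-1 : C) *: (1 + B).
have hP : adjmx P = P.
  by rewrite /P adjZ adjD adj1 hB conjc_inv conjc_nat.
have PP : adjmx P *m P = P.
  rewrite hP /P -scalemxAl -scalemxAr scalerA mulmxDl !mulmxDr BB mul1mx mulmx1.
  rewrite mul1mx.
  have -> : 1 + B + (B + 1) = (1 + B) *+ 2 by rewrite mulr2n (addrC B 1).
  by rewrite -[(1 + B) *+ 2]scaler_nat scalerA divfK // pnatr_eq0.
have := psd_tr P Hpsd; rewrite PP /P -scalemxAr mxtraceZ mulmxDr mulmx1 mxtraceD Htr.
move=> H; have := mulr_ge0 (ler0n _ 2) H.
by rewrite mulrA mulfV ?mul1r // pnatr_eq0.
Qed.

Lemma adjN p q (M : 'M[C]_(p, q)) : adjmx (- M) = - adjmx M.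
Proof. by apply/matrixP => i j; rewrite !mxE rmorphN. Qed.

Lemma tr_bound N (rho A : 'M[C]_N) :
  density rho -> A *m A = 1 -> adjmx A = A ->
  (@complex.Re R (\tr (rho *m A))) ^+ 2 <= 1.
Proof.
case=> _ Hpsd Htr AA hA.
have h1 := proj_ge0 Hpsd Htr AA hA.
have h2 := proj_ge0 Hpsd Htr (B := - A).
rewrite mulmxN mulNmx opprK AA adjN hA mulmxN linearN in h2.
have {}h2 := h2 erefl erefl.
have ReD : forall x : C, complex.Re (1 + x) = 1 + complex.Re x by case.
have ReB : forall x : C, complex.Re (1 - x) = 1 - complex.Re x by case.
move: h1 h2; rewrite !lecE ReD ReB /= => /andP [_ h1] /andP [_ h2].
nra.
Qed.

Definition sgn (s : C) := (s == 1) || (s == -1).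

Lemma common_eig N (l : seq 'M[C]_N) : (0 < N)%N ->
  (forall A, A \in l -> A *m A = 1) ->
  (forall A B, A \in l -> B \in l -> A *m B = B *m A) ->
  exists Q : 'M[C]_N, Q != 0 /\ forall A, A \in l -> exists2 s, sgn s & A *m Q = s *: Q.
Proof.
move=> N0; elim: l => [|A l IH] Hsq Hc.
  exists 1; split=> //; apply/negP => /eqP /matrixP /(_ (Ordinal N0) (Ordinal N0)).
  by rewrite !mxE eqxx /= => /eqP; rewrite oner_eq0.
have [Q [Q0 HQ]] : exists Q : 'M[C]_N, Q != 0 /\ forall B, B \in l -> exists2 s, sgn s & B *m Q = s *: Q.
  apply: IH => [B HB|B B' HB HB']; [apply: Hsq | apply: Hc]; rewrite ?in_cons ?HB ?HB' ?orbT //.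
have AA : A *m A = 1 by apply: Hsq; rewrite in_cons eqxx.
have comm : forall B, B \in l -> A *m B = B *m A.
  by move=> B HB; apply: Hc; rewrite in_cons ?eqxx ?HB ?orbT.
set Qp := (1 + A) *m Q; set Qm := (1 - A) *m Q.
have Hl : forall (M : 'M[C]_N), (M = 1 + A \/ M = 1 - A) -> forall B, B \in l ->
   exists2 s, sgn s & B *m (M *m Q) = s *: (M *m Q).
  move=> M HM B HB; have [s Hs HBQ] := HQ B HB; exists s => //.
  have BM : B *m M = M *m B.
    by case: HM => ->; rewrite ?mulmxDl ?mulmxDr mul1mx mulmx1 ?mulmxN ?mulNmx (comm B HB).
  by rewrite mulmxA BM -mulmxA HBQ scalemxAr.
have HAp : A *m Qp = Qp by rewrite /Qp mulmxA mulmxDr mulmx1 AA addrC.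
have HAm : A *m Qm = - Qm.
  by rewrite /Qm mulmxA mulmxBr mulmx1 AA -mulNmx opprB.
have sum : Qp + Qm = 2%:R *: Q.
  have E : 1 + A + (1 - A) = 2%:R *: (1 : 'M[C]_N).
    by rewrite addrACA subrr addr0 scaler_nat mulr2n.
  by rewrite /Qp /Qm -mulmxDl E -scalemxAl mul1mx.
have Hin : forall A0, A0 \in A :: l -> A0 = A \/ A0 \in l.
  by move=> A0; rewrite in_cons => /orP [/eqP ->|]; [left|right].
have [Qp0|Qpn] := eqVneq Qp 0.
  exists Qm; split.
    apply/eqP => Qm0; move: sum; rewrite Qp0 Qm0 addr0 => /esym/eqP.
    by rewrite scaler_eq0 pnatr_eq0 /= (negbTE Q0).
  move=> A0 /Hin [->|HA0]; first by exists (-1); rewrite ?scaleN1r // /sgn eqxx orbT.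
  exact: Hl (or_intror erefl) A0 HA0.
exists Qp; split => //.
move=> A0 /Hin [->|HA0]; first by exists 1; rewrite ?scale1r // /sgn eqxx.
exact: Hl (or_introl erefl) A0 HA0.
Qed.

Lemma adjM p q r (M : 'M[C]_(p, q)) (M' : 'M[C]_(q, r)) :
  adjmx (M *m M') = adjmx M' *m adjmx M.
Proof. by rewrite /adjmx map_mxM trmx_mul. Qed.

Lemma state_exists N (x : 'cV[C]_N) : x != 0 -> exists rho : 'M[C]_N,
  density rho /\ forall A s, A *m x = s *: x -> \tr (rho *m A) = s.
Proof.
move=> x0.
set nx := (adjmx x *m x) 0 0.
have nxE : nx = \sum_k (x k 0)^*%C * x k 0 by rewrite /nx mxE; apply: eq_bigr => k _; rewrite !mxE.
have nx_ge0 : 0 <= nx.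
  by rewrite nxE; apply: sumr_ge0 => k _; rewrite mulrC mulcJ_ge0.
have nx0 : nx != 0.
  apply/negP => /eqP; rewrite nxE => /psumr_eq0P H.
  move/negP: x0; apply; apply/eqP/matrixP => k l; rewrite [l]ord1 mxE.
  have /eqP := H (fun i _ => ltac:(by rewrite mulrC mulcJ_ge0)) k isT.
  by rewrite mulf_eq0 conjc_eq0 orbb => /eqP.
have nxJ : nx^*%C = nx.
  by rewrite /nx -adjE adjM adjK.
exists (nx^-1 *: (x *m adjmx x)); split; last first.
  move=> A s HA; rewrite -scalemxAl mxtraceZ mxtrace_mulC mulmxA HA -scalemxAl mxtraceZ.
  rewrite mxtrace_mulC /mxtrace big_ord1 -/nx.
  by rewrite mulrCA mulVf // mulr1.
split.
- by rewrite adjZ adjM adjK conjc_inv nxJ.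
- move=> y; rewrite -scalemxAr -scalemxAl mxE.
  rewrite mulmxA -[adjmx y *m x *m adjmx x *m y]mulmxA.
  set c := (adjmx y *m x) 0 0.
  have -> : (adjmx y *m x *m (adjmx x *m y)) 0 0 = c * c^*%C.
    rewrite [X in _ = _ * X](_ : _ = (adjmx (adjmx y *m x)) 0 0); last by rewrite adjE.
    rewrite adjM adjK; rewrite !mxE big_ord1 -!/c; congr (_ * _).
    by rewrite mxE; apply: eq_bigr => k _; rewrite !mxE.
  by apply: mulr_ge0; [rewrite invr_ge0 | apply: mulcJ_ge0].
- rewrite mxtraceZ mxtrace_mulC /mxtrace big_ord1 -/nx.
  by rewrite mulVf.
Qed.

Definition val m n (S : 'I_n -> 'I_m -> 'I_4) (w : 'I_n -> R) (rho : 'M[C]_(2 ^ m)) :=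
  \sum_(i < n) w i * (@complex.Re R (\tr (rho *m pauli_string R (S i)))) ^+ 2.

Lemma val_le m n (S : 'I_n -> 'I_m -> 'I_4) w rho :
  density rho -> (forall i, 0 <= w i) -> val S w rho <= \sum_i w i.
Proof.
move=> Hr Hw; apply: ler_sum => i _.
rewrite -[leRHS]mulr1; apply: ler_wpM2l => //.
exact: tr_bound Hr (ps_sq _) (ps_herm _).
Qed.

Lemma beta_ub m n (S : 'I_n -> 'I_m -> 'I_4) w rho :
  density rho -> (forall i, 0 <= w i) -> val S w rho <= beta S w.
Proof.
move=> Hr Hw; apply: ub_le_sup; last by exists rho.
exists (\sum_i w i) => t [rho' [Hr' ->]]; exact: val_le.
Qed.

Lemma beta_le m n (S : 'I_n -> 'I_m -> 'I_4) w x :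
  (exists rho : 'M[C]_(2 ^ m), density rho) ->
  (forall rho, density rho -> val S w rho <= x) -> beta S w <= x.
Proof.
move=> [rho Hr] H; apply: ge_sup; first by exists (val S w rho), rho.
by move=> t [rho' [Hr' ->]]; exact: H.
Qed.

Lemma col_mulmx p q r (A : 'M[C]_(p, q)) (Q : 'M[C]_(q, r)) j :
  A *m col j Q = col j (A *m Q).
Proof. by apply/matrixP => a b; rewrite !mxE; apply: eq_bigr => k _; rewrite !mxE. Qed.

Lemma col_scale p r c (Q : 'M[C]_(p, r)) j : col j (c *: Q) = c *: col j Q.
Proof. by apply/matrixP => a b; rewrite !mxE. Qed.

Lemma indep_lb k (f : rel 'I_k) m (S : 'I_k -> 'I_m -> 'I_4) w (I : {set 'I_k}) :
  realization R f S -> (forall i, 0 <= w i) -> independent f I ->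
  exists rho, density rho /\ \sum_(i in I) w i <= val S w rho.
Proof.
move=> HS Hw HI.
set l := [seq pauli_string R (S i) | i <- enum I].
have Hsq : forall A, A \in l -> A *m A = 1.
  by move=> A /mapP [i _ ->]; apply: ps_sq.
have Hc : forall A B, A \in l -> B \in l -> A *m B = B *m A.
  move=> A B /mapP [i Hi ->] /mapP [j Hj ->].
  rewrite mem_enum in Hi; rewrite mem_enum in Hj.
  have Hij : ~~ f i j.
    by move/forallP: HI => /(_ i) /implyP /(_ Hi) /forallP /(_ j) /implyP /(_ Hj).
  exact: (HS i j).2 Hij.
have [Q [Q0 HQ]] := @common_eig (2 ^ m) l (expn_gt0 2 m) Hsq Hc.
have [a [b Hab]] : exists a b, Q a b != 0.
  case: (pselect (exists a b, Q a b != 0)) => // H; exfalso.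
  move/eqP: Q0; apply; apply/matrixP => a b; rewrite mxE.
  by apply/eqP/negPn/negP => Hab; apply: H; exists a, b.
have x0 : col b Q != 0.
  by apply: contraNneq Hab => /matrixP /(_ a 0); rewrite !mxE => ->.
have [rho [Hr Htr]] := state_exists x0.
exists rho; split => //.
rewrite /val [leRHS](bigID (fun i => i \in I)) /= -[leLHS]addr0.
apply: lerD; last by apply: sumr_ge0 => i _; apply: mulr_ge0 => //; exact: sqr_ge0.
apply: ler_sum => i Hi.
have [s Hs HAQ] := HQ _ (map_f (fun i => pauli_string R (S i)) (etrans (mem_enum _ _) Hi)).
rewrite (Htr _ s); last by rewrite col_mulmx HAQ col_scale.
case/orP: Hs => /eqP -> /=; rewrite ?expr1n ?mulr1 //.
by rewrite sqrrN expr1n mulr1.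
Qed.

Lemma real_comp n (e : rel 'I_n) (v : 'I_n) m (S' : 'I_n.+1 -> 'I_m -> 'I_4)
  (g : 'I_n -> 'I_n.+1) :
  realization R (copy_vertex e v) S' -> (forall i, copy_proj v (g i) = i) ->
  realization R e (fun i => S' (g i)).
Proof. by move=> HS Hg i j; have := HS (g i) (g j); rewrite /copy_vertex !Hg. Qed.

Lemma sum_ind n (v : 'I_n) (a b : 'I_n -> R) c :
  \sum_i (a i + (if i == v then c else 0)) * b i = \sum_i a i * b i + c * b v.
Proof.
under eq_bigr => i _ do rewrite mulrDl.
rewrite big_split /=; congr (_ + _).
rewrite (bigD1 v) //= eqxx big1 ?addr0 // => i /negbTE ->; exact: mul0r.
Qed.

Lemma main_sec n (e : rel 'I_n) (v : 'I_n) :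
  hperfect R e -> hperfect R (copy_vertex e v).
Proof.
move=> HG m S' HS' w' Hw'.
set e' := copy_vertex e v.
set wd := widen_ord (leqnSn n).
have pw : forall i, copy_proj v (wd i) = i.
  move=> i; rewrite /copy_proj.
  have -> : wd i = lift ord_max i by apply: val_inj; rewrite /= /bump leqNgt ltn_ord.
  by rewrite liftK.
have pm : copy_proj v ord_max = v by rewrite /copy_proj unlift_none.
set g2 := fun i => if i == v then ord_max else wd i.
have pg2 : forall i, copy_proj v (g2 i) = i.
  by move=> i; rewrite /g2; case: eqP => [->|_].
have HT1 := real_comp HS' pw.
have HT2 := real_comp HS' pg2.
set wt := fun i => w' (wd i) + (if i == v then w' ord_max else 0).
have Hwt : forall i, 0 <= wt i.
  by move=> i; rewrite /wt; apply: addr_ge0 => //; case: ifP.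
have [rho0 [Hrho0 _]] := indep_lb HS' Hw' (I := finset.set0)
   (ltac:(by apply/forallP => i; rewrite inE)).
have Hex : exists rho : 'M[C]_(2 ^ m), density rho by exists rho0.
have Halpha : alpha e wt <= alpha e' w'.
  apply: bigmax_le.
    have -> : (0 : R) = \sum_(i in (finset.set0 : {set 'I_n.+1})) w' i by rewrite big_set0.
    apply: le_bigmax_cond.
    by apply/forallP => i; rewrite inE.
  move=> I HI.
  set I' := [set j | copy_proj v j \in I].
  have HI' : independent e' I'.
    apply/forallP => j; apply/implyP; rewrite inE => Hj.
    apply/forallP => k; apply/implyP; rewrite inE => Hk.
    by move/forallP: HI => /(_ _) /implyP /(_ Hj) /forallP /(_ _) /implyP /(_ Hk).
  suff -> : \sum_(i in I) wt i = \sum_(j in I') w' j by apply: le_bigmax_cond.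
  rewrite big_mkcond [RHS]big_mkcond big_ord_recr /= inE pm.
  under [in RHS]eq_bigr => i _ do rewrite inE pw.
  have E : forall i, (if i \in I then wt i else 0) = (if i \in I then w' (wd i) else 0)
      + (if i == v then (if v \in I then w' ord_max else 0) else 0).
    move=> i; rewrite /wt; case: eqP => [->|_]; case: (_ \in I); by rewrite ?addr0.
  rewrite (eq_bigr _ (fun i _ => E i)) big_split /=; congr (_ + _).
  rewrite (bigD1 v) //= eqxx big1 ?addr0 //.
  by move=> i /negbTE ->.
apply/eqP; rewrite eq_le; apply/andP; split.
  apply: beta_le Hex _ => rho Hr.
  pose r := fun j => (@complex.Re R (\tr (rho *m pauli_string R (S' j)))) ^+ 2.
  have eq0 : val S' w' rho = \sum_i w' (wd i) * r (wd i) + w' ord_max * r ord_max.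
    by rewrite /val big_ord_recr.
  have eq1 : val (fun i => S' (wd i)) wt rho
      = \sum_i w' (wd i) * r (wd i) + w' ord_max * r (wd v).
    by rewrite /val /wt (sum_ind v (fun i => w' (wd i)) (fun i => r (wd i))).
  have eq2 : val (fun i => S' (g2 i)) wt rho
      = \sum_i w' (wd i) * r (wd i) - w' (wd v) * r (wd v)
        + w' (wd v) * r ord_max + w' ord_max * r ord_max.
    rewrite /val /wt (sum_ind v (fun i => w' (wd i)) (fun i => r (g2 i))) /g2 eqxx.
    congr (_ + _); rewrite (bigD1 v) //= eqxx [in RHS](bigD1 v) //=.
    rewrite (eq_bigr (fun i => w' (wd i) * r (wd i))); last by move=> i /negbTE ->.
    lra.
  have hT1 : val (fun i => S' (wd i)) wt rho <= alpha e' w'.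
    apply: (le_trans (@beta_ub m n (fun i => S' (wd i)) wt rho Hr Hwt)).
    by rewrite (HG _ _ HT1 _ Hwt).
  have hT2 : val (fun i => S' (g2 i)) wt rho <= alpha e' w'.
    apply: (le_trans (@beta_ub m n (fun i => S' (g2 i)) wt rho Hr Hwt)).
    by rewrite (HG _ _ HT2 _ Hwt).
  rewrite eq0; rewrite eq1 in hT1; rewrite eq2 in hT2.
  have := Hw' ord_max; have := Hw' (wd v).
  case: (leP (r ord_max) (r (wd v))) => H ha hc; nra.
apply: bigmax_le.
  have [rho [Hr _]] := indep_lb HS' Hw' (I := finset.set0)
     (ltac:(by apply/forallP => i; rewrite inE)).
  apply: le_trans (@beta_ub m n.+1 S' w' rho Hr Hw').
  by apply: sumr_ge0 => i _; apply: mulr_ge0 => //; exact: sqr_ge0.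
move=> I HI; have [rho [Hr H]] := indep_lb HS' Hw' HI.
exact: le_trans H (@beta_ub m n.+1 S' w' rho Hr Hw').
Qed.
End S.

Theorem mainTheorem7 (R : realType) (n : nat) (e : rel 'I_n) (v : 'I_n) :
  symmetric e -> irreflexive e ->
  hperfect R e -> hperfect R (copy_vertex e v).
Proof. by move=> _ _; apply: main_sec. Qed.
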